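(* Consider $n$ agents over a fixed directed graph with nonnegative weights $a_{ij}$ ($a_{ij}>0$ iff $j\in N_i$) that has a spanning tree, with Laplacian $L$ whose eigenvalues are $\lambda_1(L)=0$ (simple) and $\lambda_2(L),\dots,\lambda_n(L)$ (positive real parts). Let $0<h<\min_{2\le i\le n}\frac{2\,\mathrm{Re}(\lambda_i(L))}{|\lambda_i(L)|^2}$. The states $x_i(t)\in\mathbb{R}^m$ evolve by $x_i(t+1)=x_i(t)+u_i(t)$ with $$y_i(t)=x_i(t)+h\sum_{j\in N_i}a_{ij}(x_j(t)-x_i(t)),\ \nabla_i(t)=\beta(t)\nabla g_i^+(y_i(t)),\ \xi_i(t)=y_i(t)-\nabla_i(t),$$ $$\varphi_i(t)=\alpha(t)\big(\xi_i(t)-P_{X_i}(\xi_i(t))\big),\ \phi_i(t)=-\nabla_i(t)-\varphi_i(t),\ u_i(t)=h\sum_{j\in N_i}a_{ij}(x_j(t)-x_i(t))+\phi_i(t),$$ for given real sequences $\alpha(t),\beta(t)$. If $\lim_{t\to\infty}\phi_i(t)=0$ for every $i$, then the agents reach consensus asymptotically, i.e. $\lim_{t\to\infty}\|x_i(t)-x_j(t)\|=0$ for all $i,j$.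
   Context: $g_i:\mathbb{R}^m\to\mathbb{R}$ convex continuous, $X_i\subset\mathbb{R}^m$ closed convex, $g_i^+=\max[g_i,0]$, $\nabla g_i^+(y)$ a subgradient of $g_i^+$ at $y$, $P_{X_i}$ Euclidean projection onto $X_i$. Laplacian $L=(l_{ij})$: $l_{ij}=-a_{ij}$ for $i\neq j$, $l_{ii}=\sum_j a_{ij}$. A spanning tree is a subset of edges forming a directed tree that connects all nodes. *)

(* Defs.v *)
From HB Require Import structures.
From mathcomp Require Import all_boot all_order all_algebra.
From mathcomp Require Import all_classical all_reals all_analysis.
From mathcomp Require Export complex.
Set Implicit Arguments.
Unset Strict Implicit.
Unset Printing Implicit Defensive.
Import Order.TTheory GRing.Theory Num.Theory.
Local Open Scope ring_scope.
Local Open Scope classical_set_scope.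

Section Defs.
Variable R : realType.

Definition dotv (m : nat) (u v : 'rV[R]_m) : R := \sum_(k < m) u 0 k * v 0 k.
Definition enorm (m : nat) (v : 'rV[R]_m) : R := Num.sqrt (dotv v v).

Definition convex_setv (m : nat) (X : set 'rV[R]_m) : Prop :=
  forall x y t, X x -> X y -> 0 <= t <= 1 -> X (t *: x + (1 - t) *: y).
Definition convex_funv (m : nat) (f : 'rV[R]_m -> R) : Prop :=
  forall x y t, 0 <= t <= 1 ->
    f (t *: x + (1 - t) *: y) <= t * f x + (1 - t) * f y.

Definition pos_part (m : nat) (f : 'rV[R]_m -> R) : 'rV[R]_m -> R :=
  fun y => Num.max (f y) 0.

Definition is_subgradient (m : nat) (f : 'rV[R]_m -> R) (y d : 'rV[R]_m) : Prop :=
  forall z, f y + dotv d (z - y) <= f z.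

Definition is_proj (m : nat) (X : set 'rV[R]_m) (v p : 'rV[R]_m) : Prop :=
  X p /\ forall z, X z -> enorm (v - p) <= enorm (v - z).

Definition laplacian (n : nat) (a : 'M[R]_n) : 'M[R]_n :=
  \matrix_(i, j) (if i == j then \sum_(k < n) a i k else - a i j).

(* a_ij > 0 iff j in N_i, i.e. there is an edge j -> i (i receives from j).
   The digraph has a (directed) spanning tree iff some root node reaches every
   node along directed edges. *)
Definition edge (n : nat) (a : 'M[R]_n) : rel 'I_n := fun j i => 0 < a i j.
Definition has_spanning_tree (n : nat) (a : 'M[R]_n) : Prop :=
  exists r : 'I_n, forall i : 'I_n, connect (edge a) r i.

Definition eigenvalueC (n : nat) (L : 'M[R]_n) (z : R[i]) : bool :=
  root (map_poly (real_complex R) (char_poly L)) z.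

Section Protocol.
Variables (n m : nat) (a : 'M[R]_n) (h : R) (alpha beta : nat -> R).
Variables (dg : 'I_n -> 'rV[R]_m -> 'rV[R]_m) (P : 'I_n -> 'rV[R]_m -> 'rV[R]_m).
Variable x : nat -> 'I_n -> 'rV[R]_m.

Definition cons_term (t : nat) (i : 'I_n) : 'rV[R]_m :=
  \sum_(j < n) a i j *: (x t j - x t i).
Definition y_ (t : nat) (i : 'I_n) := x t i + h *: cons_term t i.
Definition nabla_ (t : nat) (i : 'I_n) := beta t *: dg i (y_ t i).
Definition xi_ (t : nat) (i : 'I_n) := y_ t i - nabla_ t i.
Definition varphi_ (t : nat) (i : 'I_n) := alpha t *: (xi_ t i - P i (xi_ t i)).
Definition phi_ (t : nat) (i : 'I_n) := - nabla_ t i - varphi_ t i.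
Definition u_ (t : nat) (i : 'I_n) := h *: cons_term t i + phi_ t i.
End Protocol.

End Defs.

(* Main.v *)
Require Import Defs.
From HB Require Import structures.
From mathcomp Require Import all_boot all_order all_algebra.
From mathcomp Require Import all_classical all_reals all_analysis.
From mathcomp Require Import complex.
From mathcomp Require Import ring lra zify.
Import Order.TTheory GRing.Theory Num.Theory numFieldNormedType.Exports.
Local Open Scope ring_scope.
Local Open Scope classical_set_scope.

Module Part1.
Local Open Scope ring_scope.
Local Open Scope classical_set_scope.

Section TZ.
Variable R : realType.

Definition tz (s : nat -> R) := forall e : R, 0 < e -> exists N, forall t, (N <= t)%N -> `|s t| < e.

Lemma nearE (P : nat -> Prop) : (\forall n \near \oo, P n) <-> exists N, forall n, (N <= n)%N -> P n.
Proof. split.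
- move=> [N _ H]. exists N => n Hn; exact: H.
- move=> [N H]; exists N => //.
Qed.

Lemma tz_cvg (s : nat -> R) : s @ \oo --> (0:R) <-> tz s.
Proof.
rewrite cvgrPdist_lt; split.
- move=> H e e0; have := H e e0; rewrite nearE => -[N HN]; exists N => t /HN.
  by rewrite sub0r normrN.
- move=> H e e0; rewrite nearE; have [N HN] := H e e0; exists N => t /HN.
  by rewrite sub0r normrN.
Qed.

Lemma tz_le {s r : nat -> R} : tz r -> (forall t, `|s t| <= `|r t|) -> tz s.
Proof.
move=> H Hle e e0; have [N HN] := H e e0; exists N => t /HN; exact: le_lt_trans.
Qed.

Lemma tz_add {s r : nat -> R} : tz s -> tz r -> tz (fun t => s t + r t).
Proof.
move=> Hs Hr e e0.
have e2 : 0 < e / 2 by rewrite divr_gt0.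
have [N1 H1] := Hs _ e2; have [N2 H2] := Hr _ e2.
exists (maxn N1 N2) => t; rewrite geq_max => /andP[/H1 h1 /H2 h2].
apply: (le_lt_trans (ler_normD _ _)).
by rewrite [e](splitr e) ltrD.
Qed.

Lemma tz0 : tz (fun _ => 0).
Proof. by move=> e e0; exists 0%N => t _; rewrite normr0. Qed.

Lemma tz_scale (c : R) {s : nat -> R} : tz s -> tz (fun t => c * s t).
Proof.
move=> Hs e e0.
have c1 : 0 < `|c| + 1 by rewrite ltr_pwDr // normr_ge0.
have [N HN] := Hs (e / (`|c| + 1)) (divr_gt0 e0 c1).
exists N => t /HN h; rewrite normrM.
apply: (le_lt_trans (y := (`|c| + 1) * `|s t|)).
  by rewrite ler_wpM2r // lerDl.
by rewrite -ltr_pdivlMl // mulrC.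
Qed.

Lemma tz_opp {s : nat -> R} : tz s -> tz (fun t => - s t).
Proof. move=> H; refine (tz_le H _) => t; by rewrite normrN. Qed.

Lemma tz_sum (k : nat) (s : 'I_k -> nat -> R) : (forall i, tz (s i)) ->
  tz (fun t => \sum_(i < k) s i t).
Proof.
elim: k s => [|k IH] s H.
  by refine (tz_le (tz0) _) => t; rewrite big_ord0 normr0.
have := tz_add (IH (fun i => s (lift ord0 i)) (fun i => H _)) (H ord0).
move=> HH; refine (tz_le HH _) => t; by rewrite big_ord_recl addrC.
Qed.

Lemma tz_shift {s : nat -> R} : tz s -> tz (fun t => s t.+1).
Proof. move=> H e e0; have [N HN] := H e e0; exists N => t Ht; apply: HN; exact: leqW. Qed.

Lemma tz_rec (a b : nat -> R) (q : R) : 0 <= q < 1 -> (forall t, 0 <= a t) ->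
  (forall t, a t.+1 <= q * a t + b t) -> tz b -> tz a.
Proof.
move=> /andP[q0 q1] a0 Hrec Hb e e0.
have e2 : 0 < e / 2 by rewrite divr_gt0.
have q1' : 0 < 1 - q by rewrite subr_gt0.
have [N HN] := Hb _ (mulr_gt0 q1' e2).
have claim : forall k, a (N + k)%N <= q ^+ k * a N + e / 2.
  elim=> [|k IH]; first by rewrite expr0 mul1r addn0 lerDl ltW.
  rewrite addnS; apply: (le_trans (Hrec _)).
  have hb : b (N + k)%N <= (1 - q) * (e / 2).
    by apply: (le_trans (ler_norm _)); apply/ltW/HN/leq_addr.
  apply: (le_trans (lerD (ler_wpM2l q0 IH) hb)).
  rewrite le_eqVlt; apply/orP; left; apply/eqP; rewrite exprS; ring.
have aN1 : 0 < a N + 1 by rewrite ltr_pwDr.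
have qq : `|q| < 1 by rewrite ger0_norm.
have := cvg_expr qq; rewrite tz_cvg => Hq.
have [K HK] := Hq _ (divr_gt0 e2 aN1).
exists (N + K)%N => t Ht.
have -> : t = (N + (t - N))%N by lia.
rewrite ger0_norm //.
apply: (le_lt_trans (claim _)).
rewrite [e in _ < e](splitr e) ltrD2r.
have hk : q ^+ (t - N) < e / 2 / (a N + 1).
  have hKt : (K <= t - N)%N.
    by lia.
  have := HK (t - N)%N hKt.
  by rewrite ger0_norm // exprn_ge0.
apply: (le_lt_trans (y := q ^+ (t - N) * (a N + 1))).
  by rewrite ler_wpM2l ?exprn_ge0 // lerDl.
by rewrite -ltr_pdivlMr.
Qed.

End TZ.
Arguments tz {R} s.
Arguments tz_le {R s r}.
Arguments tz_add {R s r}.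
Arguments tz_scale {R} c {s}.
Arguments tz_opp {R s}.
Arguments tz_shift {R s}.
Arguments tz_sum {R k}.
Arguments tz_rec {R a b q}.

End Part1.
Import Part1.

Module Part2.
Local Open Scope ring_scope.
Local Open Scope classical_set_scope.
Local Open Scope complex_scope.

Section TZC.
Variable R : realType.
Local Notation C := R[i].
Definition cn (z : C) : R := Normc.normc z.

Lemma cn_ge0 z : 0 <= cn z.
Proof. by case: z => a b; rewrite /cn /=; exact: sqrtr_ge0. Qed.
Lemma cnD x y : cn (x + y) <= cn x + cn y.
Proof. exact: le_normcD. Qed.
Lemma cnM x y : cn (x * y) = cn x * cn y.
Proof. exact: Normc.normcM. Qed.
Lemma cnN x : cn (- x) = cn x.
Proof. exact: normcN. Qed.
Lemma cn0 : cn 0 = 0.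
Proof. exact: Normc.normc0. Qed.
Lemma cn_real (x : R) : cn x%:C = `|x|.
Proof. by rewrite /cn /= expr0n /= addr0 sqrtr_sqr. Qed.
Lemma Re_le_cn z : `|complex.Re z| <= cn z.
Proof.
case: z => a b; rewrite /cn /= -sqrtr_sqr ler_sqrt ?addr_ge0 ?sqr_ge0 //.
by rewrite lerDl sqr_ge0.
Qed.
Lemma Im_le_cn z : `|complex.Im z| <= cn z.
Proof.
case: z => a b; rewrite /cn /= -sqrtr_sqr ler_sqrt ?addr_ge0 ?sqr_ge0 //.
by rewrite lerDr sqr_ge0.
Qed.
Lemma cn_def z : cn z = Num.sqrt (complex.Re z ^+ 2 + complex.Im z ^+ 2).
Proof. by case: z. Qed.

Definition tzC (s : nat -> C) := tz (fun t => cn (s t)).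

Lemma tzC_le {s r : nat -> C} : tzC r -> (forall t, cn (s t) <= cn (r t)) -> tzC s.
Proof.
move=> H Hle; refine (tz_le H _) => t; rewrite !ger0_norm ?cn_ge0 //.
Qed.

Lemma tzC0 : tzC (fun _ => 0).
Proof. refine (tz_le (tz0 R) _) => t; by rewrite cn0 normr0. Qed.

Lemma tzC_add {s r : nat -> C} : tzC s -> tzC r -> tzC (fun t => s t + r t).
Proof.
move=> Hs Hr; have H := tz_add Hs Hr.
refine (tz_le H _) => t; rewrite !ger0_norm ?addr_ge0 ?cn_ge0 //; exact: cnD.
Qed.

Lemma tzC_scale (c : C) {s : nat -> C} : tzC s -> tzC (fun t => c * s t).
Proof.
move=> Hs; have H := tz_scale (cn c) Hs.
refine (tz_le H _) => t; by rewrite cnM.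
Qed.

Lemma tzC_opp {s : nat -> C} : tzC s -> tzC (fun t => - s t).
Proof. move=> H; refine (tz_le H _) => t; by rewrite cnN. Qed.

Lemma tzC_sub {s r : nat -> C} : tzC s -> tzC r -> tzC (fun t => s t - r t).
Proof. move=> H1 H2; exact: (tzC_add H1 (tzC_opp H2)). Qed.

Lemma tzC_sum (k : nat) (s : 'I_k -> nat -> C) : (forall i, tzC (s i)) ->
  tzC (fun t => \sum_(i < k) s i t).
Proof.
elim: k s => [|k IH] s H.
  by refine (tzC_le tzC0 _) => t; rewrite big_ord0.
have := tzC_add (IH (fun i => s (lift ord0 i)) (fun i => H _)) (H ord0).
move=> HH; refine (tzC_le HH _) => t; by rewrite big_ord_recl addrC.
Qed.

Lemma tzC_shift {s : nat -> C} : tzC s -> tzC (fun t => s t.+1).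
Proof. exact: tz_shift. Qed.

Lemma tzC_rec (s g : nat -> C) (mu : C) : cn mu < 1 ->
  (forall t, s t.+1 = mu * s t + g t) -> tzC g -> tzC s.
Proof.
move=> mu1 Hrec Hg.
apply: (tz_rec (q := cn mu) _ _ _ Hg).
- by rewrite cn_ge0 mu1.
- by move=> t; exact: cn_ge0.
- by move=> t; rewrite Hrec -cnM; apply: cnD.
Qed.

Lemma tzC_real (s : nat -> R) : tz s -> tzC (fun t => (s t)%:C).
Proof. move=> H; refine (tz_le H _) => t; by rewrite cn_real normr_id. Qed.

Lemma tz_Re (s : nat -> C) : tzC s -> tz (fun t => complex.Re (s t)).
Proof. move=> H; refine (tz_le H _) => t; rewrite [X in _ <= X]ger0_norm ?cn_ge0 //; exact: Re_le_cn. Qed.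

End TZC.
Arguments tzC {R} s.
Arguments tzC_le {R s r}.
Arguments tzC_add {R s r}.
Arguments tzC_scale {R} c {s}.
Arguments tzC_opp {R s}.
Arguments tzC_sub {R s r}.
Arguments tzC_sum {R k}.
Arguments tzC_shift {R s}.
Arguments tzC_rec {R s g mu}.
Arguments tzC_real {R s}.
Arguments tz_Re {R s}.
Arguments cn {R}.

End Part2.
Import Part2.

Module Part3.
Local Open Scope ring_scope.

Section Graph.
Variable R : realType.
Variable n : nat.
Variable a : 'M[R]_n.
Hypothesis a_ge0 : forall i j, 0 <= a i j.
Hypothesis a_diag : forall i, a i i = 0.
Local Notation L := (laplacian a).

Lemma Lv_entry (u : 'cV[R]_n) i : (L *m u) i 0 = \sum_j a i j * (u i 0 - u j 0).
Proof.
rewrite mxE.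
set S := \sum_k a i k.
have E : forall j, L i j * u j 0 = (i == j)%:R * (S * u j 0) - a i j * u j 0.
  move=> j; rewrite mxE -/S; case: eqP => [<-|_] /=; rewrite ?a_diag; ring.
under eq_bigr => j _ do rewrite E.
rewrite sumrB [X in X - _](bigD1 i) //= eqxx mul1r big1 ?addr0; last first.
  by move=> j /negPf; rewrite eq_sym => ->; rewrite mul0r.
under [X in _ = X]eq_bigr => j _ do rewrite mulrBr.
by rewrite sumrB -mulr_suml.
Qed.

Lemma exists_max (u : 'cV[R]_n) (i0 : 'I_n) : exists i, forall j, u j 0 <= u i 0.
Proof.
case: (@arg_maxP _ _ _ i0 xpredT (fun i => u i 0) erefl) => i _ H.
by exists i => j; apply: H.
Qed.

Lemma path_back (S : pred 'I_n) :
  (forall i j, S i -> 0 < a i j -> S j) ->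
  forall x p, path (edge a) x p -> S (last x p) -> S x.
Proof.
move=> Hcl x p; elim: p x => [|y p IH] x //= /andP[exy pth] Sl.
have Sy := IH y pth Sl.
exact: (Hcl y x Sy exy).
Qed.

Lemma ker_max (u : 'cV[R]_n) (r : 'I_n) : (forall i, connect (edge a) r i) ->
  (forall i, (L *m u) i 0 = 0) -> forall i, u i 0 <= u r 0.
Proof.
move=> Hst H0 i.
have [i1 Hi1] := exists_max u r.
pose S := fun j => u j 0 == u i1 0.
have Hcl : forall i j, S i -> 0 < a i j -> S j.
  move=> i' j /eqP Si aij.
  have := H0 i'; rewrite Lv_entry => Hs.
  have hge : forall k, true -> 0 <= a i' k * (u i' 0 - u k 0).
    by move=> k _; rewrite mulr_ge0 // subr_ge0 Si.
  have := psumr_eq0P hge Hs (i := j) erefl.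
  move/eqP; rewrite mulf_eq0 (gt_eqF aij) /= subr_eq0 Si => /eqP Ej.
  by rewrite /S -Ej.
have : S r.
  have /connectP [p pth E] := Hst i1.
  by apply: (@path_back S Hcl _ _ pth); rewrite -E /S.
by rewrite /S => /eqP ->.
Qed.

Lemma ker_const (u : 'cV[R]_n) (r : 'I_n) : (forall i, connect (edge a) r i) ->
  (forall i, (L *m u) i 0 = 0) -> forall i j, u i 0 = u j 0.
Proof.
move=> Hst H0.
have H1 := @ker_max u r Hst H0.
have H2 : forall i, (- u) i 0 <= (- u) r 0.
  apply: (@ker_max (- u) r Hst) => i; by rewrite mulmxN mxE H0 oppr0.
have E : forall i, u i 0 = u r 0.
  by move=> i; apply/eqP; rewrite eq_le H1 /=; have := H2 i; rewrite !mxE lerN2.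
by move=> i j; rewrite !E.
Qed.

Lemma no_jordan (u : 'cV[R]_n) (r : 'I_n) : (forall i, connect (edge a) r i) ->
  L *m (L *m u) = 0 -> L *m u = 0.
Proof.
move=> Hst H.
have H0 : forall i, (L *m (L *m u)) i 0 = 0 by move=> i; rewrite H mxE.
have Hc := @ker_const _ r Hst H0.
have [i1 Hi1] := exists_max u r.
have [i2 Hi2] := exists_max (- u) r.
have c1 : 0 <= (L *m u) i1 0.
  by rewrite Lv_entry sumr_ge0 // => j _; rewrite mulr_ge0 // subr_ge0.
have c2 : (L *m u) i2 0 <= 0.
  rewrite Lv_entry sumr_le0 // => j _; rewrite mulr_ge0_le0 //.
  by have := Hi2 j; rewrite !mxE lerN2 subr_le0.
apply/matrixP => i j; rewrite (ord1 j) [RHS]mxE.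
apply/eqP; rewrite eq_le; apply/andP; split; [by rewrite (Hc i i2) | by rewrite (Hc i i1)].
Qed.

Lemma rank_diff (r : 'I_n) : (forall i, connect (edge a) r i) ->
  forall i j : 'I_n, exists b : 'rV[R]_n, delta_mx 0 i - delta_mx 0 j = b *m L.
Proof.
move=> Hst i j.
pose ones : 'cV[R]_n := const_mx 1.
have Lones : L *m ones = 0.
  apply/matrixP => k l; rewrite (ord1 l) Lv_entry [RHS]mxE.
  by apply: big1 => x _; rewrite !mxE subrr mulr0.
have sub1 : (L <= kermx ones)%MS by rewrite sub_kermx Lones.
have rk_ones : \rank ones = 1%N.
  apply/eqP; rewrite eqn_leq rank_leq_col /= lt0n mxrank_eq0.
  apply/negP => /eqP /matrixP /(_ r 0); rewrite !mxE => /eqP; by rewrite oner_eq0.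
have rkK : \rank (kermx ones) = (n - 1)%N by rewrite mxrank_ker rk_ones.
have subKt : (kermx L^T <= ones^T)%MS.
  apply/row_subP => k; set u := row k (kermx L^T).
  have hu : u *m L^T = 0 by apply/eqP; rewrite -sub_kermx; exact: row_sub.
  have hu' : forall l, (L *m u^T) l 0 = 0.
    by move=> l; rewrite -{1}(trmxK L) -trmx_mul hu trmx0 mxE.
  have hc := @ker_const _ r Hst hu'.
  have -> : u = (u 0 r) *: ones^T.
    apply/matrixP => x y; rewrite (ord1 x) !mxE mulr1.
    by have := hc y r; rewrite !mxE.
  by apply: scalemx_sub.
have rkKt : (\rank (kermx L^T) <= 1)%N := leq_trans (mxrankS subKt) (rank_leq_row _).
rewrite mxrank_ker mxrank_tr in rkKt.
have eqLK : (L == kermx ones)%MS.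
  rewrite -(mxrank_leqif_eq sub1).2 rkK eqn_leq.
  have := mxrankS sub1; rewrite rkK => ->; rewrite /=.
  have := rank_leq_row L; lia.
case/andP: eqLK => _ KL.
have dK : ((delta_mx 0 i - delta_mx 0 j : 'rV[R]_n) <= kermx ones)%MS.
  rewrite sub_kermx mulmxBl -!rowE.
  by apply/eqP/matrixP => x y; rewrite !mxE subrr.
have /submxP [D ->] := submx_trans dK KL.
by exists D.
Qed.

End Graph.

End Part3.
Import Part3.

Module Part4.
Local Open Scope ring_scope.
Local Open Scope complex_scope.

Section Cplx.
Variable R : realType.
Local Notation C := R[i].
Local Notation RC := (real_complex R).
Variable n : nat.
Variable a : 'M[R]_n.+1.
Hypothesis a_ge0 : forall i j, 0 <= a i j.
Hypothesis a_diag : forall i, a i i = 0.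
Variable r : 'I_n.+1.
Hypothesis Hst : forall i, connect (edge a) r i.
Local Notation L := (laplacian a).
Local Notation Lc := (map_mx RC L).

Lemma Re_sum (I : Type) (s : seq I) (P : pred I) (F : I -> C) :
  complex.Re (\sum_(i <- s | P i) F i) = \sum_(i <- s | P i) complex.Re (F i).
Proof. by apply: (big_morph (@complex.Re R)) => // [[x1 y1] [x2 y2]]. Qed.
Lemma Im_sum (I : Type) (s : seq I) (P : pred I) (F : I -> C) :
  complex.Im (\sum_(i <- s | P i) F i) = \sum_(i <- s | P i) complex.Im (F i).
Proof. by apply: (big_morph (@complex.Im R)) => // [[x1 y1] [x2 y2]]. Qed.
Lemma Re_mulRC (x : R) (z : C) : complex.Re (RC x * z) = x * complex.Re z.
Proof. by case: z => u v /=; ring. Qed.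
Lemma Im_mulRC (x : R) (z : C) : complex.Im (RC x * z) = x * complex.Im z.
Proof. by case: z => u v /=; ring. Qed.

Lemma Re_Lc (w : 'cV[C]_n.+1) : map_mx (@complex.Re R) (Lc *m w) = L *m map_mx (@complex.Re R) w.
Proof.
apply/matrixP => i j; rewrite !mxE Re_sum; apply: eq_bigr => k _.
by rewrite !mxE Re_mulRC.
Qed.
Lemma Im_Lc (w : 'cV[C]_n.+1) : map_mx (@complex.Im R) (Lc *m w) = L *m map_mx (@complex.Im R) w.
Proof.
apply/matrixP => i j; rewrite !mxE Im_sum; apply: eq_bigr => k _.
by rewrite !mxE Im_mulRC.
Qed.

Lemma jordanC_col (w : 'cV[C]_n.+1) : Lc *m (Lc *m w) = 0 -> Lc *m w = 0.
Proof.
move=> H.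
have hr : L *m (L *m map_mx (@complex.Re R) w) = 0.
  by rewrite -!Re_Lc H; apply/matrixP => i j; rewrite !mxE.
have hi : L *m (L *m map_mx (@complex.Im R) w) = 0.
  by rewrite -!Im_Lc H; apply/matrixP => i j; rewrite !mxE.
have hr' := @no_jordan R _ a a_ge0 a_diag _ r Hst hr.
have hi' := @no_jordan R _ a a_ge0 a_diag _ r Hst hi.
rewrite -Re_Lc in hr'; rewrite -Im_Lc in hi'.
move: hr' hi'; move: (Lc *m w) => M.
move=> /matrixP h1 /matrixP h2; apply/matrixP => i j.
move: (h1 i j) (h2 i j); rewrite !mxE.
by case: (M i j) => u v /= -> ->.
Qed.

Lemma jordanC (p : nat) (B : 'M[C]_(n.+1, p)) : Lc *m (Lc *m B) = 0 -> Lc *m B = 0.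
Proof.
move=> H; apply/matrixP => i k.
have := jordanC_col (B *m delta_mx k 0).
rewrite !mulmxA -(mulmxA Lc Lc B) H mul0mx => /(_ erefl) /matrixP /(_ i 0).
by rewrite -colE !mxE.
Qed.

Lemma jordanCk (k : nat) (B : 'M[C]_n.+1) : Lc ^+ k.+1 *m B = 0 -> Lc *m B = 0.
Proof.
elim: k B => [|k IH] B; first by rewrite expr1.
move=> H; apply: IH.
have E : Lc ^+ k.+2 *m B = Lc *m (Lc *m (Lc ^+ k *m B)).
  by rewrite !exprS -!mulmxE !mulmxA.
have E2 : Lc ^+ k.+1 *m B = Lc *m (Lc ^+ k *m B).
  by rewrite !exprS -!mulmxE !mulmxA.
rewrite E2; apply: jordanC; by rewrite -E.
Qed.

End Cplx.

End Part4.
Import Part4.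

Module Part5.
Local Open Scope ring_scope.
Local Open Scope complex_scope.

Section Chain.
Variable R : realType.
Local Notation C := R[i].

Definition tzv {k} (Y : nat -> 'cV[C]_k) := forall i, tzC (fun t => Y t i 0).

Lemma tzv_mul {k l} (A : 'M[C]_(l,k)) (Y : nat -> 'cV[C]_k) :
  tzv Y -> tzv (fun t => A *m Y t).
Proof.
move=> H i.
have := tzC_sum (fun j t => A i j * Y t j 0) (fun j => tzC_scale (A i j) (H j)).
by move=> H2; refine (tzC_le H2 _) => t; rewrite mxE.
Qed.

Definition recY {k} (M : 'M[C]_k) (hc : C) (Y G : nat -> 'cV[C]_k) :=
  forall t, Y t.+1 = Y t - hc *: (M *m Y t) + G t.

Lemma step {k} (M : 'M[C]_k) hc z Y G : cn (1 - hc * z) < 1 -> recY M hc Y G ->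
  tzv G -> tzv (fun t => (M - z%:M) *m Y t) -> tzv Y.
Proof.
move=> Hz Hr HG HE i.
pose E := fun t => (M - z%:M) *m Y t.
apply: (tzC_rec (mu := 1 - hc * z) (g := fun t => G t i 0 - hc * E t i 0) Hz).
- move=> t; rewrite Hr.
  have -> : M *m Y t = E t + z *: Y t by rewrite /E mulmxBl mul_scalar_mx subrK.
  rewrite !mxE; ring.
- exact: (tzC_sub (HG i) (tzC_scale hc (HE i))).
Qed.

Lemma comm_prod n (M : 'M[C]_n.+1) (zs : seq C) :
  (\prod_(z <- zs) (M - z%:M)) * M = M * \prod_(z <- zs) (M - z%:M).
Proof.
elim: zs => [|z zs IH]; first by rewrite big_nil mul1r mulr1.
rewrite big_cons -mulrA IH !mulrA; congr (_ * _).
by rewrite mulrBl mulrBr -!mulmxE scalar_mxC.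
Qed.

Lemma chain n (M : 'M[C]_n.+1) hc (zs : seq C) :
  (forall z, z \in zs -> cn (1 - hc * z) < 1) ->
  forall Y G, recY M hc Y G -> tzv G ->
  tzv (fun t => (\prod_(z <- zs) (M - z%:M)) *m Y t) -> tzv Y.
Proof.
elim: zs => [|z zs IH] Hz Y G HY HG HP.
  by move: HP; under eq_fun do rewrite big_nil mul1mx.
pose P := \prod_(w <- zs) (M - w%:M).
have Hz' : forall w, w \in zs -> cn (1 - hc * w) < 1.
  by move=> w hw; apply: Hz; rewrite in_cons hw orbT.
apply: (IH Hz' Y G HY HG).
apply: (step M hc z (fun t => P *m Y t) (fun t => P *m G t) (Hz z (mem_head _ _))).
- move=> t; rewrite HY mulmxDr mulmxBr -scalemxAr !mulmxA.
  have -> : P *m M = M *m P by rewrite mulmxE /P comm_prod.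
  by [].
- exact: tzv_mul.
- by move: HP; under eq_fun do rewrite big_cons -mulmxE -mulmxA.
Qed.

End Chain.
Arguments tzv {R k} Y.

End Part5.
Import Part5.

Module Part6.
Local Open Scope ring_scope.
Local Open Scope complex_scope.

Lemma split_prod (R : realType) n (M : 'M[R[i]]_n.+1) (rs : seq R[i]) :
  \prod_(z <- rs) (M - z%:M) =
  M ^+ (count (pred1 0) rs) * \prod_(z <- rs | z != 0) (M - z%:M).
Proof.
elim: rs => [|z rs IH]; first by rewrite !big_nil expr0 mul1r.
rewrite !big_cons /= IH.
case: eqP => [->|nz] /=.
  by rewrite raddf0 subr0 exprS mulrA.
rewrite add0n !mulrA; congr (_ * _).
have c : GRing.comm (M - z%:M) M.
  by rewrite /GRing.comm mulrBl mulrBr -!mulmxE scalar_mxC.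
by rewrite (commrX _ c).
Qed.

Lemma eig_bound (R : realType) (h : R) (z : R[i]) : 0 < h ->
  h * (complex.Re z ^+ 2 + complex.Im z ^+ 2) < 2 * complex.Re z ->
  cn (1 - real_complex R h * z) < 1.
Proof.
case: z => x y h0 H.
rewrite cn_def -[X in _ < X]sqrtr1 ltr_sqrt //.
simpl in H |- *.
nra.
Qed.

Section Kill.
Variable R : realType.
Local Notation C := R[i].
Local Notation RC := (real_complex R).
Variable n : nat.
Variable a : 'M[R]_n.+1.
Hypothesis a_ge0 : forall i j, 0 <= a i j.
Hypothesis a_diag : forall i, a i i = 0.
Variable r : 'I_n.+1.
Hypothesis Hst : forall i, connect (edge a) r i.
Local Notation L := (laplacian a).
Local Notation Lc := (map_mx RC L).

Lemma Lc_kill : exists zs : seq C, (forall z, z \in zs -> eigenvalueC L z /\ z != 0) /\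
  Lc * \prod_(z <- zs) (Lc - z%:M) = 0.
Proof.
pose pc := char_poly Lc.
have [rs Hrs] := closed_field_poly_normal pc.
have lc1 : lead_coef pc = 1 by apply/monicP; exact: char_poly_monic.
rewrite lc1 scale1r in Hrs.
exists [seq z <- rs | z != 0]; split.
  move=> z; rewrite mem_filter => /andP[nz zin]; split => //.
  by rewrite /eigenvalueC map_char_poly -/pc Hrs root_prod_XsubC.
have CH := Cayley_Hamilton Lc; rewrite -/pc Hrs rmorph_prod in CH.
have E : \prod_(z <- rs) horner_mx Lc ('X - z%:P) = \prod_(z <- rs) (Lc - z%:M).
  by apply: eq_bigr => z _; rewrite rmorphB /= horner_mx_X horner_mx_C.
rewrite E split_prod in CH; rewrite big_filter.
move: CH; case: (count _ _) => [|k].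
  by rewrite expr0 mul1r => ->; rewrite mulr0.
move=> CH; rewrite -mulmxE; apply: (@jordanCk R n a a_ge0 a_diag r Hst k).
by rewrite mulmxE.
Qed.

End Kill.

End Part6.
Import Part6.

Module Part7.
Local Open Scope ring_scope.
Local Open Scope classical_set_scope.

Lemma sumsq_le (R : realType) m (F : 'I_m -> R) :
  \sum_(k < m) F k * F k <= (\sum_(k < m) `|F k|) ^+ 2.
Proof.
elim: m F => [|m IH] F; first by rewrite !big_ord0 expr0n.
rewrite !big_ord_recr /=.
have := IH (fun k => F (widen_ord (leqnSn m) k)).
set S := \sum_(i < m) `|F _|.
set D := \sum_(i < m) _.
move=> H.
have S0 : 0 <= S by apply: sumr_ge0 => k _; exact: normr_ge0.
have x0 : 0 <= `|F ord_max| by exact: normr_ge0.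
have xx : `|F ord_max| * `|F ord_max| = F ord_max * F ord_max.
  by rewrite -normrM ger0_norm // -expr2 sqr_ge0.
nra.
Qed.

Lemma enorm_le (R : realType) m (w : 'rV[R]_m) : enorm w <= \sum_(k < m) `|w 0 k|.
Proof.
rewrite /enorm /dotv.
have S0 : 0 <= \sum_(k < m) `|w 0 k| by apply: sumr_ge0 => k _; exact: normr_ge0.
rewrite -(ger0_norm S0) -sqrtr_sqr ler_sqrt ?sqr_ge0 //.
exact: (@sumsq_le R m (fun k => w 0 k)).
Qed.

Lemma tz_row (R : realType) m (f : nat -> 'rV[R]_m) :
  f @ \oo --> (0 : 'rV[R]_m) -> forall k, tz (fun t => f t 0 k).
Proof.
rewrite cvgrPdist_lt => H k e e0.
have := H e e0; rewrite nearE => -[N HN]; exists N => t /HN.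
rewrite sub0r normrN; apply: le_lt_trans.
have -> : `|f t| = mx_norm (f t) by [].
rewrite mx_normrE.
exact: (le_bigmax _ (fun ij : 'I_1 * 'I_m => `|f t ij.1 ij.2|) (0, k)).
Qed.

End Part7.
Import Part7.


Lemma eq_le_helper (R : realType) (y : R) : `| `|y| | <= `|y|.
Proof. by rewrite normr_id. Qed.

Theorem proposition4 (R : realType) (n m : nat) (a : 'M[R]_n)
    (g : 'I_n -> 'rV[R]_m -> R) (X : 'I_n -> set 'rV[R]_m)
    (dg : 'I_n -> 'rV[R]_m -> 'rV[R]_m) (P : 'I_n -> 'rV[R]_m -> 'rV[R]_m)
    (h : R) (alpha beta : nat -> R) (x : nat -> 'I_n -> 'rV[R]_m) :
  (forall i j, 0 <= a i j) ->
  (forall i, a i i = 0) ->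
  has_spanning_tree a ->
  (forall i, convex_funv (g i)) ->
  (forall i, continuous (g i)) ->
  (forall i, closed (X i)) ->
  (forall i, convex_setv (X i)) ->
  (forall i y, is_subgradient (pos_part (g i)) y (dg i y)) ->
  (forall i v, is_proj (X i) v (P i v)) ->
  0 < h ->
  (forall z : R[i], eigenvalueC (laplacian a) z -> z != 0 ->
     h * (complex.Re z ^+ 2 + complex.Im z ^+ 2) < 2 * complex.Re z) ->
  (forall t i, x t.+1 i = x t i + u_ a h alpha beta dg P x t i) ->
  (forall i, phi_ a h alpha beta dg P x ^~ i @ \oo --> (0 : 'rV[R]_m)) ->
  forall i j, (fun t => enorm (x t i - x t j)) @ \oo --> 0.
Proof.
move=> a_ge0 a_diag [r Hst] _ _ _ _ _ _ h0 Heig Hx Hphi i j.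
destruct n as [|n]; first by case: i.
pose phi := phi_ a h alpha beta dg P x.
pose L := laplacian a.
pose RC := real_complex R.
pose Lc := map_mx RC L.
have key : forall k, tz (fun t => x t i 0 k - x t j 0 k).
  move=> k.
  pose v t : 'cV[R]_n.+1 := \col_l x t l 0 k.
  pose w t : 'cV[R]_n.+1 := \col_l phi t l 0 k.
  have Hw : forall l, tz (fun t => w t l 0).
    move=> l; have := @tz_row R m _ (Hphi l) k.
    by move=> H; refine (tz_le H _) => t; rewrite mxE.
  have Hv : forall t, v t.+1 = v t - h *: (L *m v t) + w t.
    move=> t; apply/matrixP => l c; rewrite (ord1 c).
    have e1 : v t.+1 l 0 = x t l 0 k + h * \sum_j' a l j' * (x t j' 0 k - x t l 0 k) + phi t l 0 k.
      rewrite mxE Hx /u_ /phi.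
      rewrite /cons_term !(mxE, summxE).
      have sE : \sum_k0 (a l k0 *: (x t k0 - x t l)) 0 k = \sum_j' a l j' * (x t j' 0 k - x t l 0 k).
        by apply: eq_bigr => j' _; rewrite !mxE.
      by rewrite !sE addrA.
    have e2 : (v t - h *: (L *m v t) + w t) l 0 = v t l 0 - h * (L *m v t) l 0 + w t l 0.
      by rewrite !mxE.
    rewrite e1 e2 (@Lv_entry R _ a a_diag) !mxE.
    have -> : \sum_j' a l j' * (x t l 0 k - v t j' 0) = - \sum_j' a l j' * (x t j' 0 k - x t l 0 k).
      rewrite -sumrN; apply: eq_bigr => j' _; rewrite mxE; ring.
    ring.
  pose V t := map_mx RC (v t).
  pose W t := map_mx RC (w t).
  have HY : @recY R _ Lc (RC h) (fun t => Lc *m V t) (fun t => Lc *m W t).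
    move=> t; rewrite /V Hv map_mxD map_mxB map_mxZ map_mxM -/Lc.
    by rewrite mulmxDr mulmxBr -scalemxAr.
  have HG : tzv (fun t => Lc *m W t).
    apply: (@tzv_mul R) => l; have := tzC_real (Hw l).
    by move=> H; refine (tzC_le H _) => t; rewrite mxE.
  have [zs [Hzs Hkill]] := @Lc_kill R n a a_ge0 a_diag r Hst.
  have Hb : forall z, z \in zs -> cn (1 - RC h * z) < 1.
    move=> z /Hzs [ev nz]; apply: (@eig_bound R) => //; exact: Heig.
  have HYt := @chain R n Lc (RC h) zs Hb _ _ HY HG.
  have HY0 : tzv (fun t => Lc *m V t).
    apply: HYt => l.
    refine (tzC_le (tzC0 R) _) => t.
    rewrite mulmxA.
    have -> : (\prod_(z <- zs) (Lc - z%:M)) *m Lc = 0 by rewrite mulmxE comm_prod /Lc /L /RC Hkill.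
    rewrite mul0mx mxE cn0; exact: lexx.
  have HLv : forall l, tz (fun t => (L *m v t) l 0).
    move=> l; have := tz_Re (HY0 l).
    move=> H; refine (tz_le H _) => t.
    by rewrite /V /Lc /RC -map_mxM [X in _ <= `|complex.Re X|]mxE.
  have [b Hb'] := @rank_diff R _ a a_ge0 a_diag r Hst i j.
  have E : forall t, x t i 0 k - x t j 0 k = \sum_l b 0 l * (L *m v t) l 0.
    move=> t.
    have : (((delta_mx 0 i - delta_mx 0 j : 'rV[R]_n.+1)) *m v t) 0 0 = (b *m (L *m v t)) 0 0.
      by rewrite mulmxA -Hb'.
    rewrite mulmxBl -!rowE !mxE => ->.
    by [].
  have := tz_sum (fun l t => b 0 l * (L *m v t) l 0) (fun l => tz_scale (b 0 l) (HLv l)).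
  by move=> H; refine (tz_le H _) => t; rewrite E.
apply/tz_cvg.
have := tz_sum (fun k t => `|x t i 0 k - x t j 0 k|)
  (fun k => tz_le (key k) (fun t => @eq_le_helper R _)).
move=> H; refine (tz_le H _) => t.
rewrite [X in _ <= X]ger0_norm; last by apply: sumr_ge0 => k _; exact: normr_ge0.
rewrite ger0_norm; last by rewrite /enorm sqrtr_ge0.
apply: (le_trans (@enorm_le R m _)).
by apply: ler_sum => k _; rewrite !mxE.
Qed.
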